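(* Let $\mathbb{F}\in\{\mathbb{R},\mathbb{C}\}$, $N\ge2$, and let $\mathcal{P}(M,N)$ be the set of Parseval frames for $\mathbb{F}^N$ with $M$ vectors. Suppose an equiangular Parseval frame exists in $\mathcal{P}(M,N)$. Then $\Phi\in\mathcal{P}(M,N)$ maximizes the $2$-nuclear energy $NE_2$ over $\mathcal{P}(M,N)$ if and only if $\Phi$ is an equiangular Parseval frame.
   Context: A Parseval frame for $\mathbb{F}^N$ is a family $\{\varphi_i\}_{i=1}^M\subseteq\mathbb{F}^N$ whose $N\times M$ matrix $\Phi$ (columns $\varphi_i$) satisfies $\Phi\Phi^*=I$; it is equiangular if all $\|\varphi_i\|$ are equal and all $|\langle\varphi_i,\varphi_j\rangle|$, $i\ne j$, are equal. For $K\subseteq[M]$, $\Phi_K$ is the submatrix of columns indexed by $K$. The nuclear norm of a matrix $F$ is $\|F\|_*=\sum_i\sigma_i(F)$, the sum of its singular values. The $k$-nuclear energy is $NE_k(\Phi)=\sum_{|K|=k}\|\Phi_K\|_*$. *)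

(* Defs.v *)
(* Scalars: C = R[i] (complex numbers over a real field R : realType);
   the real case F = R is encoded as matrices over C with real entries. *)
From HB Require Import structures.
From mathcomp Require Import all_boot all_order all_algebra.
From mathcomp Require Import reals complex.
Set Implicit Arguments. Unset Strict Implicit. Unset Printing Implicit Defensive.
Import Order.TTheory GRing.Theory Num.Theory.
Local Open Scope ring_scope.
Local Open Scope complex_scope.

Inductive scalar_field := FieldR | FieldC.

Section Frames.
Variable R : realType.
Local Notation C := R[i].

Definition in_field (F : scalar_field) (x : C) : bool :=
  match F with FieldR => x \is Num.real | FieldC => true end.

Definition adjmx m n (A : 'M[C]_(m, n)) : 'M[C]_(n, m) :=
  \matrix_(i, j) (A j i)^*.

Definition inner n (x y : 'cV[C]_n) : C := \sum_k x k 0 * (y k 0)^*.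
Definition vnorm n (x : 'cV[C]_n) : C := sqrtC (inner x x).

(* singular values: square roots of the eigenvalues (with multiplicity,
   i.e. the roots of the characteristic polynomial) of A^* A *)
Definition eig_seq n (B : 'M[C]_n) : seq C :=
  sval (closed_field_poly_normal (char_poly B)).
Definition singular_values m n (A : 'M[C]_(m, n)) : seq C :=
  [seq sqrtC z | z <- eig_seq (adjmx A *m A)].
Definition nuclear_norm m n (A : 'M[C]_(m, n)) : C :=
  \sum_(s <- singular_values A) s.

Definition subcols N M (Phi : 'M[C]_(N, M)) (K : {set 'I_M}) : 'M[C]_(N, #|K|) :=
  colsub (fun i : 'I_#|K| => enum_val i) Phi.

Definition nuclear_energy N M (k : nat) (Phi : 'M[C]_(N, M)) : C :=
  \sum_(K : {set 'I_M} | #|K| == k) nuclear_norm (subcols Phi K).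

Definition parseval_frame (F : scalar_field) N M (Phi : 'M[C]_(N, M)) : Prop :=
  (forall i j, in_field F (Phi i j)) /\ Phi *m adjmx Phi = 1%:M.

Definition equiangular N M (Phi : 'M[C]_(N, M)) : Prop :=
  (forall i j : 'I_M, vnorm (col i Phi) = vnorm (col j Phi)) /\
  (forall i j k l : 'I_M, i != j -> k != l ->
     `|inner (col i Phi) (col j Phi)| = `|inner (col k Phi) (col l Phi)|).

Definition equiangular_parseval_frame (F : scalar_field) N M (Phi : 'M[C]_(N, M)) :=
  parseval_frame F Phi /\ equiangular Phi.

End Frames.

(* Main.v *)
Require Import Defs.
From HB Require Import structures.
From mathcomp Require Import all_boot all_order all_algebra.
From mathcomp Require Import reals complex.
From mathcomp Require Import ring.
Import Order.TTheory GRing.Theory Num.Theory.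
Local Open Scope ring_scope.
Set Implicit Arguments. Unset Strict Implicit. Unset Printing Implicit Defensive.

Section S.
Variable R : realType.
Local Notation C := R[i].


Lemma mulconj_ge0 (x : C) : 0 <= x * conjc x.
Proof. by rewrite -sqr_normc exprn_ge0. Qed.

Lemma eig_ge0 m n (A : 'M[C]_(m, n)) (z : C) (v : 'rV[C]_n) :
  v != 0 -> v *m (adjmx A *m A) = z *: v -> 0 <= z.
Proof.
move=> v0 ev.
set w := v *m adjmx A.
have key : z * (\sum_j v 0 j * conjc (v 0 j)) = \sum_k w 0 k * conjc (w 0 k).
  rewrite mulr_sumr.
  transitivity (\sum_j (v *m (adjmx A *m A)) 0 j * conjc (v 0 j)).
    by apply: eq_bigr => j _; rewrite ev mxE mulrA.
  rewrite mulmxA.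
  under eq_bigr => j _ do rewrite mxE mulr_suml.
  rewrite exchange_big /=; apply: eq_bigr => k _.
  under eq_bigr => j _ do rewrite -mulrA.
  rewrite -mulr_sumr; congr (_ * _).
  rewrite /w mxE rmorph_sum; apply: eq_bigr => j _.
  by rewrite /adjmx !mxE rmorphM /= conjcK mulrC.
have S0 : 0 < \sum_j v 0 j * conjc (v 0 j).
  rewrite lt_def sumr_ge0 ?andbT; last by move=> j _; apply: mulconj_ge0.
  apply: contra v0 => /eqP /psumr_eq0P H.
  apply/eqP/rowP => j; rewrite mxE.
  have /eqP := H (fun i _ => mulconj_ge0 _) j isT.
  by rewrite -sqr_normc expf_eq0 /= normr_eq0 => /eqP.
have : 0 <= z * (\sum_j v 0 j * conjc (v 0 j)).
  by rewrite key sumr_ge0 // => k _; apply: mulconj_ge0.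
by rewrite pmulr_lge0.
Qed.
Lemma nuc2 m (A : 'M[C]_(m, 2)) :
  0 <= \det (adjmx A *m A) /\
  nuclear_norm A = sqrtC (\tr (adjmx A *m A) + 2 * sqrtC (\det (adjmx A *m A))).
Proof.
rewrite /nuclear_norm /singular_values /eig_seq.
set B := adjmx A *m A.
case: (closed_field_poly_normal _) => r /= Dp.
have mon := char_poly_monic B.
move: Dp; rewrite (monicP mon) scale1r => Dp.
have sz : size r = 2%N.
  by have := size_char_poly B; rewrite Dp size_prod_XsubC => -[].
have ge0 : forall z, z \in r -> 0 <= z.
  move=> z zr.
  have : eigenvalue B z by rewrite eigenvalue_root_char Dp root_prod_XsubC.
  by case/eigenvalueP => v Hv v0; apply: (eig_ge0 v0 Hv).
have tr : \tr B = \sum_(z <- r) z.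
  have := char_poly_trace B erefl; rewrite Dp.
  case: r sz {ge0 Dp} => [|z1 [|z2 [|]]] //= _.
  rewrite !big_cons big_nil mulr1 => H.
  apply: oppr_inj; rewrite -H.
  rewrite mulrBl !mulrBr !coefE /= big_nil.
  idtac.
  by ring.
have det : \det B = \prod_(z <- r) z.
  have := char_poly_det B; rewrite Dp coef0_prod_XsubC sz.
  by rewrite expr2 mulrNN mulr1 !mul1r => ->.
rewrite tr det.
case: r sz {Dp ge0 tr det} (ge0) => [|z1 [|z2 [|]]] //= _ ge0.
rewrite !big_cons !big_nil !addr0 mulr1.
have h1 : 0 <= z1 by apply: ge0; rewrite inE eqxx.
have h2 : 0 <= z2 by apply: ge0; rewrite !inE eqxx orbT.
split; first by rewrite mulr_ge0.
rewrite sqrtCM ?nnegrE //.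
have -> : z1 + z2 + 2 * (sqrtC z1 * sqrtC z2) = (sqrtC z1 + sqrtC z2) ^+ 2.
  rewrite -{1}(sqrtCK z1) -{1}(sqrtCK z2); ring.
by rewrite sqrCK // addr_ge0 // sqrtC_ge0.
Qed.

Lemma det22 (B : 'M[C]_2) : \det B = ((\tr B) ^+ 2 - \tr (B *m B)) / 2.
Proof.
rewrite (expand_det_row B 0) /cofactor !big_ord_recl big_ord0 !det_mx11 /mxtrace.
rewrite !big_ord_recl !big_ord0 !mxE !big_ord_recl !big_ord0 /=.
have E1 : (lift 0 0 : 'I_2) = lift ord0 ord0 by apply/val_inj.
have E2 : lift (lift ord0 ord0 : 'I_2) (0 : 'I_1) = (ord0 : 'I_2) by apply/val_inj.
rewrite E1 E2 /bump /= expr0 expr1.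
set a := B _ _; set b := B _ _; set c := B _ _; set d := B _ _.
rewrite !addr0.
have h2 : (2 : C) != 0 by rewrite pnatr_eq0.
apply: (mulIf h2); rewrite mulfVK //.
ring.
Qed.


Lemma sum2 M (F : 'I_M -> C) i j : i != j ->
  \sum_(x in [set i; j]) F x = F i + F j.
Proof.
move=> ij; rewrite (bigD1 i) ?inE ?eqxx //= (bigD1 j) ?inE ?eqxx ?orbT 1?eq_sym //=.
rewrite big1 ?addr0 // => x /andP[/andP[]]; rewrite !inE => /orP[]->//.
Qed.

Lemma card2_eq M (K : {set 'I_M}) i j : i != j ->
  (#|K| == 2%N) && (i \in K) && (j \in K) = (K == [set i; j]).
Proof.
move=> ij; apply/idP/eqP => [/andP[/andP[/eqP cK iK] jK]|->].
  apply/esym/eqP; rewrite eqEcard cards2 ij cK leqnn andbT.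
  by apply/subsetP => x; rewrite !inE => /orP[]/eqP->.
by rewrite cards2 ij !inE !eqxx orbT.
Qed.

Lemma pair_sum M (h : 'I_M -> 'I_M -> C) : (forall x, h x x = 0) ->
  \sum_(K : {set 'I_M} | #|K| == 2%N) \sum_(x in K) \sum_(y in K) h x y
  = \sum_x \sum_y h x y.
Proof.
move=> h0.
transitivity (\sum_(K : {set 'I_M} | #|K| == 2%N) \sum_x \sum_y
   (if (x \in K) && (y \in K) then h x y else 0)).
  apply: eq_bigr => K _; rewrite big_mkcond /=; apply: eq_bigr => x _.
  case: (x \in K) => /=; last by rewrite big1.
  by rewrite big_mkcond.
rewrite exchange_big /=; apply: eq_bigr => x _.
rewrite exchange_big /=; apply: eq_bigr => y _.
have [<-|xy] := eqVneq x y.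
  by rewrite h0 big1 // => K _; case: ifP.
rewrite -big_mkcondr /=.
rewrite (eq_bigl (fun K => K == [set x; y])); last first.
  by move=> K; rewrite -card2_eq // andbA.
by rewrite big_pred1_eq.
Qed.

Lemma nucn m n (A : 'M[C]_(m, n)) : n = 2%N ->
  let B := adjmx A *m A in
  0 <= ((\tr B) ^+ 2 - \tr (B *m B)) / 2 /\
  nuclear_norm A = sqrtC (\tr B + 2 * sqrtC (((\tr B) ^+ 2 - \tr (B *m B)) / 2)).
Proof. by move=> e; subst n => /=; rewrite -det22; apply: nuc2. Qed.

Definition gram N M (Phi : 'M[C]_(N, M)) : 'M[C]_M := adjmx Phi *m Phi.
Definition sK N M (Phi : 'M[C]_(N, M)) (K : {set 'I_M}) : C :=
  \sum_(x in K) gram Phi x x.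
Definition pK N M (Phi : 'M[C]_(N, M)) (K : {set 'I_M}) : C :=
  ((sK Phi K) ^+ 2 - \sum_(x in K) \sum_(y in K) gram Phi x y * gram Phi y x) / 2.

Lemma gramE N M (Phi : 'M[C]_(N, M)) x y :
  gram Phi x y = \sum_k conjc (Phi k x) * Phi k y.
Proof. by rewrite /gram mxE; apply: eq_bigr => k _; rewrite mxE. Qed.

Lemma nucK N M (Phi : 'M[C]_(N, M)) (K : {set 'I_M}) : #|K| = 2%N ->
  0 <= pK Phi K /\ nuclear_norm (subcols Phi K) = sqrtC (sK Phi K + 2 * sqrtC (pK Phi K)).
Proof.
move=> cK; have [] := nucn (subcols Phi K) cK.
set B := adjmx _ *m _.
have BE : forall i j, B i j = gram Phi (enum_val i) (enum_val j).
  move=> i j; rewrite gramE /B mxE; apply: eq_bigr => k _.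
  by rewrite /adjmx /subcols !mxE.
have trE : \tr B = sK Phi K.
  by rewrite /sK big_enum_val /mxtrace; apply: eq_bigr => i _; rewrite BE.
have tr2E : \tr (B *m B) = \sum_(x in K) \sum_(y in K) gram Phi x y * gram Phi y x.
  rewrite big_enum_val /mxtrace; apply: eq_bigr => i _.
  rewrite mxE [RHS]big_enum_val; apply: eq_bigr => j _.
  by rewrite !BE.
by rewrite /pK -trE -tr2E.
Qed.

Section Gram.
Variables (N M : nat) (Phi : 'M[C]_(N, M)).
Local Notation G := (gram Phi).

Lemma sK2 i j : i != j -> sK Phi [set i; j] = G i i + G j j.
Proof. by move=> ij; rewrite /sK sum2. Qed.

Lemma pK2 i j : i != j -> pK Phi [set i; j] = G i i * G j j - G i j * G j i.
Proof.
move=> ij; rewrite /pK /sK sum2 // sum2 // !sum2 //.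
have h2 : (2 : C) != 0 by rewrite pnatr_eq0.
apply: (mulIf h2); rewrite mulfVK //; ring.
Qed.

Lemma gram_adj i j : G j i = conjc (G i j).
Proof.
rewrite !gramE rmorph_sum; apply: eq_bigr => k _.
by rewrite rmorphM /= conjcK mulrC.
Qed.

Lemma gram_diag_ge0 i : 0 <= G i i.
Proof.
rewrite gramE sumr_ge0 // => k _; rewrite mulrC; exact: mulconj_ge0.
Qed.

Lemma sq_expand (P : pred 'I_M) :
  ((\sum_(x | P x) G x x) ^+ 2 - \sum_(x | P x) \sum_(y | P y) G x y * G y x) / 2
  = \sum_(x | P x) \sum_(y | P y) (G x x * G y y - G x y * G y x) / 2.
Proof.
rewrite expr2 mulr_suml -sumrB mulr_suml; apply: eq_bigr => x _.
rewrite mulr_sumr -sumrB mulr_suml; apply: eq_bigr => y _.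
by [].
Qed.

Lemma sum_pK : \sum_(K : {set 'I_M} | #|K| == 2%N) pK Phi K
  = ((\tr G) ^+ 2 - \tr (G *m G)) / 2.
Proof.
transitivity (\sum_(K : {set 'I_M} | #|K| == 2%N) \sum_(x in K) \sum_(y in K)
   (G x x * G y y - G x y * G y x) / 2).
  by apply: eq_bigr => K _; rewrite /pK /sK sq_expand.
rewrite pair_sum; last by move=> x; rewrite subrr mul0r.
rewrite -sq_expand /mxtrace; congr ((_ - _) / 2).
by apply: eq_bigr => x _; rewrite mxE.
Qed.

Lemma sum_in_eq (A : {set 'I_M}) x (c : C) : x \in A ->
  \sum_(y in A) (x == y)%:R * c = c.
Proof.
move=> xA; rewrite (bigD1 x) //= eqxx mul1r big1 ?addr0 // => y /andP[_ yx].
by rewrite eq_sym (negbTE yx) mul0r.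
Qed.

Lemma sum_sK : \sum_(K : {set 'I_M} | #|K| == 2%N) sK Phi K
  = (M%:R - 1) * \tr G.
Proof.
transitivity (\sum_(K : {set 'I_M} | #|K| == 2%N) \sum_(x in K) \sum_(y in K)
   (G x x - (x == y)%:R * G x x)).
  apply: eq_bigr => K /eqP cK; rewrite /sK; apply: eq_bigr => x xK.
  by rewrite sumrB sum_in_eq // sumr_const cK mulr2n addrK.
rewrite pair_sum; last by move=> x; rewrite eqxx mul1r subrr.
rewrite /mxtrace mulr_sumr; apply: eq_bigr => x _.
have := sum_in_eq (x:=x) (A := setT) (G x x) (in_setT x).
under eq_bigl do rewrite in_setT.
by rewrite sumrB sumr_const card_ord => ->; rewrite mulrBl mul1r mulr_natl.
Qed.

Hypothesis PF : Phi *m adjmx Phi = 1%:M.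

Lemma gram_idem : G *m G = G.
Proof. by rewrite /gram mulmxA -(mulmxA (adjmx Phi)) PF mulmx1. Qed.

Lemma gram_tr : \tr G = N%:R.
Proof. by rewrite /gram mxtrace_mulC PF mxtrace1. Qed.

End Gram.
Lemma amgm (a b : C) : a \is Num.real -> 0 < b ->
  a <= (a ^+ 2 + b ^+ 2) / (2 * b) /\ (a = (a ^+ 2 + b ^+ 2) / (2 * b) -> a = b).
Proof.
move=> ar b0.
have b2 : 2 * b != 0 by rewrite mulf_neq0 ?pnatr_eq0 // gt_eqF.
have e : (a ^+ 2 + b ^+ 2) / (2 * b) - a = (a - b) ^+ 2 / (2 * b).
  by field; rewrite gt_eqF.
split.
  rewrite -subr_ge0 e divr_ge0 //; last by rewrite mulr_ge0 ?ler0n ?ltW.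
  by apply: real_exprn_even_ge0 => //; rewrite rpredB // gtr0_real.
move=> ea; have : (a - b) ^+ 2 / (2 * b) = 0 by rewrite -e -ea subrr.
by move/eqP; rewrite mulf_eq0 invr_eq0 (negbTE b2) orbF expf_eq0 /= subr_eq0 => /eqP.
Qed.

Definition Lf (s0 p0 s p : C) :=
  (s + s0 + 2 * sqrtC p0 + (p + p0) / sqrtC p0) / (2 * sqrtC (s0 + 2 * sqrtC p0)).
Definition ff (s p : C) := sqrtC (s + 2 * sqrtC p).

Lemma tangent (s0 p0 s p : C) : 0 <= s -> 0 <= p -> 0 <= s0 -> 0 < p0 ->
  ff s p <= Lf s0 p0 s p /\ (ff s p = Lf s0 p0 s p -> s = s0 /\ p = p0).
Proof.
move=> s_ge0 p_ge0 s0_ge0 p0_gt0.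
rewrite /ff /Lf.
set x := sqrtC p; set x0 := sqrtC p0.
have x0_gt0 : 0 < x0 by rewrite sqrtC_gt0.
have x_ge0 : 0 <= x by rewrite sqrtC_ge0.
have xr : x \is Num.real by apply: sqrtC_real.
have [Hx Hxe] := amgm xr x0_gt0.
rewrite !sqrtCK in Hx Hxe.
set u := s + 2 * x; set u0 := s0 + 2 * x0.
have u0_gt0 : 0 < u0 by rewrite ltr_wpDl // mulr_gt0 ?ltr0n.
have u_ge0 : 0 <= u by rewrite addr_ge0 // mulr_ge0 ?ler0n.
set y := sqrtC u; set y0 := sqrtC u0.
have y0_gt0 : 0 < y0 by rewrite sqrtC_gt0.
have yr : y \is Num.real by apply: sqrtC_real.
have [Hy Hye] := amgm yr y0_gt0.
rewrite !sqrtCK in Hy Hye.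
have x0n : x0 != 0 by rewrite gt_eqF.
have y0n : y0 != 0 by rewrite gt_eqF.
have eL : (s + s0 + 2 * x0 + (p + p0) / x0) / (2 * y0)
         = (u0 + (s + 2 * ((p + p0) / (2 * x0)))) / (2 * y0).
  by rewrite /u0; congr (_ / _); field.
have Hux : u + u0 <= u0 + (s + 2 * ((p + p0) / (2 * x0))).
  by rewrite addrC lerD2l lerD2l ler_pM2l ?ltr0n.
have H2 : (u + u0) / (2 * y0) <= (u0 + (s + 2 * ((p + p0) / (2 * x0)))) / (2 * y0).
  by rewrite ler_pM2r // invr_gt0 mulr_gt0 ?ltr0n.
rewrite eL; split; first exact: le_trans Hy H2.
move=> eq.
have e1 : y = (u + u0) / (2 * y0).
  by apply: le_anti; rewrite Hy /= eq H2.
have e2 : (u + u0) / (2 * y0) = (u0 + (s + 2 * ((p + p0) / (2 * x0)))) / (2 * y0).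
  by rewrite -e1.
have yy0 := Hye e1.
have uu0 : u = u0 by rewrite -(sqrtCK u) -(sqrtCK u0) -/y -/y0 yy0.
have two0 : (2 : C) != 0 by rewrite pnatr_eq0.
have e3 : x = (p + p0) / (2 * x0).
  have e2' : u + u0 = u0 + (s + 2 * ((p + p0) / (2 * x0))).
    by apply: (mulIf (invr_neq0 (mulf_neq0 two0 y0n))).
  move: e2'; rewrite uu0 => /addrI; rewrite -uu0 /u => /addrI; idtac.
  exact: (mulfI two0).
have xx0 := Hxe e3.
have pp0 : p = p0 by rewrite -(sqrtCK p) -(sqrtCK p0) -/x -/x0 xx0.
split => //.
by move: uu0; rewrite /u /u0 xx0 => /addIr.
Qed.

Lemma Lf0 (s0 p0 : C) : 0 <= s0 -> 0 < p0 -> Lf s0 p0 s0 p0 = ff s0 p0.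
Proof.
move=> s0_ge0 p0_gt0; rewrite /Lf /ff.
set x0 := sqrtC p0; set y0 := sqrtC _.
have x0n : x0 != 0 by rewrite gt_eqF // sqrtC_gt0.
have u0_gt0 : 0 < s0 + 2 * x0 by rewrite ltr_wpDl // mulr_gt0 ?ltr0n ?sqrtC_gt0.
have y0n : y0 != 0 by rewrite gt_eqF // sqrtC_gt0.
have ep : p0 = x0 ^+ 2 by rewrite sqrtCK.
have ey : s0 + 2 * x0 = y0 ^+ 2 by rewrite sqrtCK.
rewrite ep.
have -> : s0 + s0 + 2 * x0 + (x0 ^+ 2 + x0 ^+ 2) / x0 = 2 * (s0 + 2 * x0) by field.
by rewrite ey; field.
Qed.

Lemma Lf_split (s0 p0 s p : C) :
  Lf s0 p0 s p = (s + p / sqrtC p0) / (2 * sqrtC (s0 + 2 * sqrtC p0)) + Lf s0 p0 0 0.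
Proof. rewrite /Lf; ring. Qed.

Lemma Lf_sum (I : finType) (P : pred I) (a b : I -> C) (s0 p0 : C) :
  \sum_(K | P K) Lf s0 p0 (a K) (b K) =
  ((\sum_(K | P K) a K) + (\sum_(K | P K) b K) / sqrtC p0)
     / (2 * sqrtC (s0 + 2 * sqrtC p0)) + \sum_(K | P K) Lf s0 p0 0 0.
Proof.
under eq_bigr => K _ do rewrite Lf_split.
by rewrite big_split /= -mulr_suml big_split /= -mulr_suml.
Qed.

Lemma NE_E N M (Phi : 'M[C]_(N, M)) :
  nuclear_energy 2 Phi = \sum_(K : {set 'I_M} | #|K| == 2%N) ff (sK Phi K) (pK Phi K).
Proof.
by apply: eq_bigr => K /eqP cK; have [_ ->] := nucK Phi cK.
Qed.

Lemma sK_ge0 N M (Phi : 'M[C]_(N, M)) K : 0 <= sK Phi K.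
Proof. by rewrite /sK sumr_ge0 // => x _; apply: gram_diag_ge0. Qed.

Lemma main_cmp N M (Phi0 Psi : 'M[C]_(N, M)) (s0 p0 : C) :
  (2 <= N)%N -> Phi0 *m adjmx Phi0 = 1%:M -> Psi *m adjmx Psi = 1%:M ->
  (forall K : {set 'I_M}, #|K| == 2%N -> sK Phi0 K = s0 /\ pK Phi0 K = p0) ->
  nuclear_energy 2 Psi <= nuclear_energy 2 Phi0 /\
  (nuclear_energy 2 Psi = nuclear_energy 2 Phi0 ->
     forall K : {set 'I_M}, #|K| == 2%N -> sK Psi K = s0 /\ pK Psi K = p0).
Proof.
move=> N2 P0 P1 H0.
have SsE : \sum_(K : {set 'I_M} | #|K| == 2%N) sK Psi K
         = \sum_(K : {set 'I_M} | #|K| == 2%N) sK Phi0 K.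
  by rewrite !sum_sK (gram_tr P0) (gram_tr P1).
have SpE : \sum_(K : {set 'I_M} | #|K| == 2%N) pK Psi K
         = \sum_(K : {set 'I_M} | #|K| == 2%N) pK Phi0 K.
  by rewrite !sum_pK (gram_idem P0) (gram_idem P1) (gram_tr P0) (gram_tr P1).
have Sp0 : \sum_(K : {set 'I_M} | #|K| == 2%N) pK Phi0 K != 0.
  rewrite sum_pK (gram_idem P0) (gram_tr P0).
  have -> : (N%:R ^+ 2 - N%:R : C) = (N * N - N)%:R.
    by rewrite natrB ?natrM ?expr2 // leq_pmull // ltnW.
  rewrite mulf_neq0 ?invr_eq0 ?pnatr_eq0 //.
  rewrite -lt0n subn_gt0; rewrite -{1}(muln1 N) ltn_mul2l; apply/andP; split => //.
  exact: ltnW.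
have [K0 HK0] : exists K : {set 'I_M}, #|K| == 2%N.
  case: (pickP (fun K : {set 'I_M} => #|K| == 2%N)) => [K0 HK0|none].
    by exists K0.
  by move: Sp0; rewrite big_pred0 ?eqxx.
have [es0 ep0] := H0 K0 HK0.
have s0_ge0 : 0 <= s0 by rewrite -es0 sK_ge0.
have p0_ge0 : 0 <= p0 by rewrite -ep0; have [] := nucK Phi0 (eqP HK0).
have p0_gt0 : 0 < p0.
  rewrite lt_def p0_ge0 andbT; apply: contra Sp0 => /eqP p00.
  by apply/eqP; rewrite big1 // => K HK; have [_ ->] := H0 K HK.
have Hf : forall K : {set 'I_M}, #|K| == 2%N ->
   ff (sK Psi K) (pK Psi K) <= Lf s0 p0 (sK Psi K) (pK Psi K) /\
   (ff (sK Psi K) (pK Psi K) = Lf s0 p0 (sK Psi K) (pK Psi K) ->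
      sK Psi K = s0 /\ pK Psi K = p0).
  move=> K HK; apply: tangent => //; first exact: sK_ge0.
  by have [] := nucK Psi (eqP HK).
have SL : \sum_(K : {set 'I_M} | #|K| == 2%N) Lf s0 p0 (sK Psi K) (pK Psi K)
        = nuclear_energy 2 Phi0.
  transitivity (\sum_(K : {set 'I_M} | #|K| == 2%N) Lf s0 p0 (sK Phi0 K) (pK Phi0 K)).
    by rewrite [LHS]Lf_sum [RHS]Lf_sum SsE SpE.
  rewrite NE_E; apply: eq_bigr => K HK.
  have [-> ->] := H0 K HK; exact: Lf0.
split.
  rewrite -SL NE_E; apply: ler_sum => K HK; by have [] := Hf K HK.
move=> eqNE K HK.
have [_ Hfe] := Hf K HK; apply: Hfe.
have : \sum_(K : {set 'I_M} | #|K| == 2%N)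
    (Lf s0 p0 (sK Psi K) (pK Psi K) - ff (sK Psi K) (pK Psi K)) = 0.
  by rewrite sumrB SL -NE_E eqNE subrr.
move/psumr_eq0P => Z.
have Zge : forall K' : {set 'I_M}, #|K'| == 2%N ->
   0 <= Lf s0 p0 (sK Psi K') (pK Psi K') - ff (sK Psi K') (pK Psi K').
  by move=> K' HK'; rewrite subr_ge0; have [] := Hf K' HK'.
have := Z Zge K HK.
by move/eqP; rewrite subr_eq0 => /eqP.
Qed.

Lemma innerG N M (Phi : 'M[C]_(N, M)) i j :
  inner (col i Phi) (col j Phi) = gram Phi j i.
Proof. by rewrite gramE /inner; apply: eq_bigr => k _; rewrite !mxE mulrC. Qed.

Lemma vnormG N M (Phi : 'M[C]_(N, M)) i : vnorm (col i Phi) = sqrtC (gram Phi i i).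
Proof. by rewrite /vnorm innerG. Qed.

Definition gconst N M (Phi : 'M[C]_(N, M)) :=
  (forall i j, gram Phi i i = gram Phi j j) /\
  (forall i j k l, i != j -> k != l -> `|gram Phi i j| = `|gram Phi k l|).

Lemma equi_gconst N M (Phi : 'M[C]_(N, M)) : equiangular Phi <-> gconst Phi.
Proof.
split => [[H1 H2]|[H1 H2]]; split.
- by move=> i j; apply: sqrtC_inj; rewrite -!vnormG.
- by move=> i j k l ij kl; have := H2 j i l k; rewrite !innerG; apply; rewrite eq_sym.
- by move=> i j; rewrite !vnormG (H1 i j).
- by move=> i j k l ij kl; rewrite !innerG; apply: H2; rewrite eq_sym.
Qed.

Lemma pK2n N M (Phi : 'M[C]_(N, M)) i j : i != j ->
  pK Phi [set i; j] = gram Phi i i * gram Phi j j - `|gram Phi i j| ^+ 2.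
Proof. by move=> ij; rewrite pK2 // sqr_normc -gram_adj. Qed.

Lemma gconst_pairs N M (Phi : 'M[C]_(N, M)) : gconst Phi ->
  exists s0 p0, forall K : {set 'I_M}, #|K| == 2%N -> sK Phi K = s0 /\ pK Phi K = p0.
Proof.
move=> [H1 H2].
case: (pickP (fun K : {set 'I_M} => #|K| == 2%N)) => [K0 HK0|none]; last first.
  by exists 0, 0 => K; rewrite none.
exists (sK Phi K0), (pK Phi K0) => K HK.
move/cards2P: HK => [i [j [ij ->]]].
move/cards2P: HK0 => [k [l [kl ->]]].
rewrite !sK2 // !pK2n //.
by rewrite (H1 i k) (H1 j l) (H2 i j k l).
Qed.

Lemma gram_diag_le1 N M (Phi : 'M[C]_(N, M)) i :
  Phi *m adjmx Phi = 1%:M -> gram Phi i i <= 1.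
Proof.
move=> PF.
set a := gram Phi i i.
have a0 : 0 <= a := gram_diag_ge0 Phi i.
have ca : conjc a = a by rewrite /a -gram_adj.
have : a * a <= a.
  rewrite {3}/a -(gram_idem PF) mxE (bigD1 i) //=.
  rewrite -/a lerDl sumr_ge0 // => k _.
  by rewrite (gram_adj _ i k) mulconj_ge0.
have [->|a_gt0] := eqVneq a 0; first by rewrite ler01.
have ap : 0 < a by rewrite lt_def a_gt0 a0.
by move=> h; rewrite -(ler_pM2l ap) mulr1.
Qed.

Lemma two_le1 (a b : C) : a <= 1 -> b <= 1 -> 2%:R <= a + b -> a = 1.
Proof.
move=> a1 b1 h; apply: le_anti; rewrite a1 /=.
have : 2%:R - b <= a by rewrite lerBlDr.
apply: le_trans.
by rewrite lerBrDr mulr2n lerD2l.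
Qed.

Lemma pairs_gconst N M (Phi : 'M[C]_(N, M)) (s0 p0 : C) :
  (2 <= N)%N -> Phi *m adjmx Phi = 1%:M ->
  (forall K : {set 'I_M}, #|K| == 2%N -> sK Phi K = s0 /\ pK Phi K = p0) ->
  gconst Phi.
Proof.
move=> N2 PF H.
have pair : forall i j, i != j -> sK Phi [set i; j] = s0 /\ pK Phi [set i; j] = p0.
  by move=> i j ij; apply: H; rewrite cards2 ij.
have D : forall i j, gram Phi i i = gram Phi j j.
  move=> i j; have [->//|ij] := eqVneq i j.
  case: (pickP (fun k => (k != i) && (k != j))) => [k /andP[ki kj]|none].
    have ik : i != k by rewrite eq_sym.
    have jk : j != k by rewrite eq_sym.
    have [e1 _] := pair i k ik.
    have [e2 _] := pair j k jk.
    rewrite !sK2 // in e1 e2.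
    by apply: (addIr (gram Phi k k)); rewrite e1 e2.
  have eS : \sum_x gram Phi x x = gram Phi i i + gram Phi j j.
    rewrite -(sum2 (fun x => gram Phi x x) ij); apply: eq_bigl => x; rewrite !inE; have := none x.
    by case: (x == i); case: (x == j).
  have eN : gram Phi i i + gram Phi j j = N%:R by rewrite -eS -(gram_tr PF).
  have h2 : (2%:R : C) <= gram Phi i i + gram Phi j j by rewrite eN ler_nat.
  have a1 := gram_diag_le1 i PF; have b1 := gram_diag_le1 j PF.
  rewrite (two_le1 a1 b1 h2); apply/esym; apply: (two_le1 b1 a1); by rewrite addrC.
split => // i j k l ij kl.
have [_ e1] := pair i j ij; have [_ e2] := pair k l kl.
rewrite !pK2n // in e1 e2.
have : `|gram Phi i j| ^+ 2 = `|gram Phi k l| ^+ 2.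
  apply: (@subrI _ (gram Phi i i * gram Phi j j)).
  by rewrite e1 (D i k) (D j l) e2.
by move/eqP; rewrite eqrXn2 // => /eqP.
Qed.
End S.

Theorem theorem15 (R : realType) (F : scalar_field) (N M : nat) :
  (2 <= N)%N ->
  (exists Phi0 : 'M[R[i]]_(N, M), equiangular_parseval_frame F Phi0) ->
  forall Phi : 'M[R[i]]_(N, M), parseval_frame F Phi ->
    ((forall Psi : 'M[R[i]]_(N, M), parseval_frame F Psi ->
        nuclear_energy 2 Psi <= nuclear_energy 2 Phi)
     <-> equiangular_parseval_frame F Phi).
Proof.
move=> N2 [Phi0 [[F0 P0] EQ0]] Phi [FPhi PPhi]; split.
- move=> Hmax.
  have [s0 [p0 H0]] := gconst_pairs (proj1 (equi_gconst Phi0) EQ0).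
  have [le1 eqc] := main_cmp N2 P0 PPhi H0.
  have le2 := Hmax Phi0 (conj F0 P0).
  have e := le_anti (andb_true_intro (conj le1 le2)).
  split; first by split.
  apply/equi_gconst; exact: (pairs_gconst N2 PPhi (eqc e)).
- move=> [_ EQ] Psi [_ PPsi].
  have [s0 [p0 H0]] := gconst_pairs (proj1 (equi_gconst Phi) EQ).
  by have [] := main_cmp N2 PPhi PPsi H0.
Qed.
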